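(* Let $A,B,E,C$ define the stochastic system $X_{k+1}=AX_k+BU_k+EW_k$, $Y_k=CX_k$, with i.i.d. disturbances $W_k\in\mathcal L^2$ of known distribution, $(A,B)$ controllable, $(A,C)$ observable, and $T_{\mathrm{ini}}$ an integer not smaller than the lag of $(A,C)$. Assume it is equivalent to the VARX model $Y_k=\hat A\,Y_{[k-T_{\mathrm{ini}},k-1]}+\hat B\,U_{[k-T_{\mathrm{ini}},k-1]}+W_{k-1}$ with $\hat A\in\mathbb R^{n_y\times T_{\mathrm{ini}}n_y}$, $\hat B\in\mathbb R^{n_y\times T_{\mathrm{ini}}n_u}$, $W_k\in\mathcal L^2(\mathbb R^{n_y})$, and write $\mathbb E[W]$ for the common mean of the $W_k$. Let $(u^{\mathrm{ud}},y^{\mathrm{ud}})_{[1-T_{\mathrm{ini}},T]}$ be real data with $y^{\mathrm{ud}}_k=\hat A\,y^{\mathrm{ud}}_{[k-T_{\mathrm{ini}},k-1]}+\hat B\,u^{\mathrm{ud}}_{[k-T_{\mathrm{ini}},k-1]}$ for all $k\in\mathbb I_{[1,T]}$, and let $N\in\mathbb N^+$ satisfy $\operatorname{rank}\begin{bmatrix}\mathcal H_{T_{\mathrm{ini}}+N}(u^{\mathrm{ud}}_{[1,T]})\\ \mathcal H_{T_{\mathrm{ini}}}(y^{\mathrm{ud}}_{[1,T-N]})\end{bmatrix}=(T_{\mathrm{ini}}+N)n_u+T_{\mathrm{ini}}n_y$. Let $(\tilde u,\tilde y)_{[1-T_{\mathrm{ini}},0]}$ be a measured (deterministic) initial input-output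 trajectory. Define $y^w_1=\mathbb E[W]$ and $$y^w_{[2,N]}=\mathcal H_{N-1}(y^{\mathrm{ud}}_{[T_{\mathrm{ini}}+1,T]})\begin{bmatrix}\mathcal H_{T_{\mathrm{ini}}+N-1}(u^{\mathrm{ud}}_{[1,T]})\\ \mathcal H_{T_{\mathrm{ini}}-1}(y^{\mathrm{ud}}_{[1,T-N]})\\ \mathcal H_1(y^{\mathrm{ud}}_{[T_{\mathrm{ini}},T-N+1]})\end{bmatrix}^{\dagger}\begin{bmatrix}0_{(T_{\mathrm{ini}}+N-1)n_u\times1}\\ 0_{(T_{\mathrm{ini}}-1)n_y\times1}\\ \mathbb E[W]\end{bmatrix},$$ where $\dagger$ is the Moore–Penrose inverse. Then real sequences $(\mathsf u^0,\mathsf y^0)_{[1,N]}$ satisfy the zeroth PCE coefficient dynamics $$\mathsf y^0_k=\hat A\,\mathsf y^0_{[k-T_{\mathrm{ini}},k-1]}+\hat B\,\mathsf u^0_{[k-T_{\mathrm{ini}},k-1]}+\mathbb E[W],\ k\in\mathbb I_{[1,N]},\qquad (\mathsf u^0,\mathsf y^0)_{[1-T_{\mathrm{ini}},0]}=(\tilde u,\tilde y)_{[1-T_{\mathrm{ini}},0]},$$ if and only if there exists $\mathsf g^0\in\mathbb R^{T-N-T_{\mathrm{ini}}+1}$ such that $$\begin{bmatrix}\mathcal H_{T_{\mathrm{ini}}}(u^{\mathrm{ud}}_{[1,T-N]})\\ \mathcal H_{T_{\mathrm{ini}}}(y^{\mathrm{ud}}_{[1,T-N]})\\ \mathcal H_N(u^{\mathrm{ud}}_{[T_{\mathrm{ini}}+1,T]})\\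 \mathcal H_N(y^{\mathrm{ud}}_{[T_{\mathrm{ini}}+1,T]})\end{bmatrix}\mathsf g^0=\begin{bmatrix}\tilde u_{[1-T_{\mathrm{ini}},0]}\\ \tilde y_{[1-T_{\mathrm{ini}},0]}\\ \mathsf u^0_{[1,N]}\\ y^u_{[1,N]}\end{bmatrix},\qquad\text{where } y^u_k=\mathsf y^0_k-\sum_{i=1}^k y^w_i .$$
   Context: $\mathcal L^2(\mathbb R^n)$: $\mathbb R^n$-valued random variables with finite second moments. $\mathbb I_{[a,b]}=\{a,\dots,b\}$; $z_{[a,b]}=[z_a^\top,\dots,z_b^\top]^\top$. For $z_{[a,b]}$ with $z_k\in\mathbb R^n$ and $M\le b-a+1$, $\mathcal H_M(z_{[a,b]})$ is the $Mn\times(b-a-M+2)$ block Hankel matrix whose $(r,c)$ block is $z_{a+r+c-2}$. The lag of observable $(A,C)$ is the smallest $\ell$ with $[C^\top,\dots,(CA^{\ell-1})^\top]^\top$ of full column rank. In polynomial chaos expansion (PCE) with first basis function $\phi^0=1$, the zeroth PCE coefficient of a random variable is its mean; the zeroth coefficients of inputs/outputs obey the VARX dynamics with disturbance replaced by $\mathbb E[W]$ and, for a deterministic initial trajectory, initial condition equal to that trajectory. *)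

(* Defs.v *)
From HB Require Import structures.
From mathcomp Require Import all_boot all_order all_algebra.
Set Implicit Arguments. Unset Strict Implicit. Unset Printing Implicit Defensive.
Import Order.TTheory GRing.Theory Num.Theory.
Local Open Scope ring_scope.

(* Block Hankel matrix H_M(z_[a, a+M+L-2]) with L columns: the (r,c) block
   (0-based) is z_(a + r + c); blocks of size n are stacked row-major,
   i.e. row r*n + k of column c is the k-th entry of z_(a+r+c). *)
Definition hankel (R : ringType) (n M L : nat) (z : int -> 'cV[R]_n) (a : int)
  : 'M[R]_(M * n, L) :=
  \matrix_(i < M * n, c < L)
    (mxvec (\matrix_(r < M, k < n) z (a + r%:Z + c%:Z) k 0)) 0 i.

Definition seg (R : ringType) (n : nat) (z : int -> 'cV[R]_n) (a : int) (M : nat)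
  : 'cV[R]_(M * n) :=
  (mxvec (\matrix_(r < M, k < n) z (a + r%:Z) k 0))^T.

(* r-th block (0-based) of a stacked vector v = [v_0; ...; v_(M-1)] (0 if r >= M) *)
Definition blk (R : ringType) (n M : nat) (v : 'cV[R]_(M * n)) (r : nat) : 'cV[R]_n :=
  \col_(k < n) (if (insub r : option 'I_M) is Some i then vec_mx v^T i k else 0).

Definition moore_penrose (R : comRingType) (m n : nat)
  (A : 'M[R]_(m, n)) (X : 'M[R]_(n, m)) : Prop :=
  [/\ A *m X *m A = A, X *m A *m X = X,
      (A *m X)^T = A *m X & (X *m A)^T = X *m A].

(* Main.v *)
Require Import Defs.
From HB Require Import structures.
From mathcomp Require Import all_boot all_order all_algebra.
From mathcomp Require Import zify.
Import Order.TTheory GRing.Theory Num.Theory.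
Local Open Scope ring_scope.

Set Implicit Arguments. Unset Strict Implicit.
Section S.
Variable R : comRingType.
Variable n : nat.
Implicit Types z : int -> 'cV[R]_n.

Lemma seg_eq z z' a a' M : (forall r : nat, (r < M)%N -> z (a + r%:Z) = z' (a' + r%:Z)) ->
  seg z a M = seg z' a' M.
Proof. move=> H; rewrite /seg; congr (mxvec _)^T; apply/matrixP => r k; by rewrite !mxE H. Qed.

Lemma seg_inj z z' a a' M : seg z a M = seg z' a' M ->
  forall r : nat, (r < M)%N -> z (a + r%:Z) = z' (a' + r%:Z).
Proof.
move=> E0 r rM; have := congr1 (fun v => vec_mx v^T) E0; rewrite /seg /= !trmxK !mxvecK => /matrixP E.
apply/matrixP => k j; rewrite ord1; have := E (Ordinal rM) k; rewrite !mxE //.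
Qed.

Lemma blk_seg z a M r : (r < M)%N -> blk (seg z a M) r = z (a + r%:Z).
Proof.
move=> rM; rewrite /blk /seg trmxK mxvecK; apply/matrixP => k j; rewrite ord1 !mxE.
by rewrite insubT /= mxE.
Qed.

Lemma seg_entry z a M (r : 'I_M) (k : 'I_n) : seg z a M (mxvec_index r k) 0 = z (a + r%:Z) k 0.
Proof. by rewrite /seg mxE mxvecE mxE. Qed.

Lemma seg_ext z z' a M : (forall t, z t = z' t) -> seg z a M = seg z' a M.
Proof. by move=> H; apply: seg_eq => r _; rewrite H. Qed.

Lemma seg_add z z' a M : seg (fun t => z t + z' t) a M = seg z a M + seg z' a M.
Proof.
apply/matrixP => i j; rewrite [RHS]mxE ord1; case/mxvec_indexP: i => r k.
by rewrite !seg_entry mxE.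
Qed.

Lemma seg_sub z z' a M : seg (fun t => z t - z' t) a M = seg z a M - seg z' a M.
Proof.
apply/matrixP => i j; rewrite ord1; case/mxvec_indexP: i => r k.
by rewrite !(seg_entry, mxE).
Qed.

Lemma seg_scale (c : R) z a M : seg (fun t => c *: z t) a M = c *: seg z a M.
Proof.
apply/matrixP => i j; rewrite ord1; case/mxvec_indexP: i => r k.
by rewrite !(seg_entry, mxE).
Qed.

Lemma seg_sum L (F : 'I_L -> int -> 'cV[R]_n) a M :
  seg (fun t => \sum_(c < L) F c t) a M = \sum_(c < L) seg (F c) a M.
Proof.
apply/matrixP => i j; rewrite [RHS]summxE ord1; case/mxvec_indexP: i => r k.
by rewrite !seg_entry summxE; apply: eq_bigr => c _; rewrite seg_entry.
Qed.

Lemma seg0 a M : seg (fun _ => 0) a M = 0 :> 'cV[R]_(M * n).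
Proof.
apply/matrixP => i j; rewrite [RHS]mxE ord1; case/mxvec_indexP: i => r k.
by rewrite !seg_entry mxE.
Qed.

Lemma seg_shift z a d M : seg (fun t => z (t + d)) a M = seg z (a + d) M.
Proof. by rewrite /seg; congr (mxvec _)^T; apply/matrixP => r k; rewrite !mxE -!addrA (addrC d). Qed.

Definition tr L (g : 'cV[R]_L) z := fun t => \sum_(c < L) g c 0 *: z (t + c%:Z).

Lemma hankel_mul M L z a (g : 'cV[R]_L) :
  hankel M L z a *m g = seg (tr g z) a M.
Proof.
apply/matrixP => i j; rewrite ord1 !mxE; case/mxvec_indexP: i => r k.
rewrite mxvecE mxE summxE; apply: eq_bigr => c _.
by rewrite !mxE mxvecE mxE mulrC. Qed.
End S.

Section V.
Variable R : comRingType.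
Variables nu ny Tini : nat.
Variables (Ahat : 'M[R]_(ny, Tini * ny)) (Bhat : 'M[R]_(ny, Tini * nu)).

Definition vx (y : int -> 'cV[R]_ny) (u : int -> 'cV[R]_nu) (k : int) :=
  Ahat *m seg y (k - Tini%:Z) Tini + Bhat *m seg u (k - Tini%:Z) Tini.

Lemma vx_ext y y' u u' k :
  (forall r : nat, (r < Tini)%N -> y (k - Tini%:Z + r%:Z) = y' (k - Tini%:Z + r%:Z)) ->
  (forall r : nat, (r < Tini)%N -> u (k - Tini%:Z + r%:Z) = u' (k - Tini%:Z + r%:Z)) ->
  vx y u k = vx y' u' k.
Proof. by move=> Hy Hu; rewrite /vx (seg_eq Hy) (seg_eq Hu). Qed.

Lemma traj_vx T L (uud : int -> 'cV[R]_nu) (yud : int -> 'cV[R]_ny) (g : 'cV[R]_L) k :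
  (forall k : int, 1 <= k <= T%:Z -> yud k = vx yud uud k) ->
  1 <= k -> k + L%:Z <= T%:Z + 1 ->
  tr g yud k = vx (tr g yud) (tr g uud) k.
Proof.
move=> Hd k1 kL; rewrite /tr; rewrite /vx !seg_sum !mulmx_sumr -big_split /=.
apply: eq_bigr => c _; rewrite !seg_scale -!scalemxAr -scalerDr; congr (_ *: _).
rewrite Hd; last by have := ltn_ord c; lia.
by rewrite /vx !seg_shift addrAC.
Qed.

Lemma vx_unique N y1 y2 u1 u2 :
  (forall k : int, 1 <= k <= N%:Z -> y1 k = vx y1 u1 k) ->
  (forall k : int, 1 <= k <= N%:Z -> y2 k = vx y2 u2 k) ->
  (forall t : int, 1 - Tini%:Z <= t <= N%:Z -> u1 t = u2 t) ->
  (forall t : int, 1 - Tini%:Z <= t <= 0 -> y1 t = y2 t) ->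
  forall t : int, 1 - Tini%:Z <= t <= N%:Z -> y1 t = y2 t.
Proof.
move=> H1 H2 Hu Hy.
suff P : forall m : nat, forall t : int, 1 - Tini%:Z <= t <= N%:Z -> t <= m%:Z -> y1 t = y2 t.
  by move=> t Ht; apply: (P (absz t)) => //; lia.
elim=> [|m IH] t Ht tm; first by apply: Hy; lia.
have [tm'|tm'] := boolP (t <= m%:Z); first exact: IH.
rewrite H1 ?H2; try lia.
apply: vx_ext => r rT.
  apply: IH; lia.
apply: Hu; lia.
Qed.
End V.

Lemma zmod_fact (V : zmodType) (y a e b c : V) : y - (a + e) - (b - a + c) = y - (b + c + e).
Proof.
rewrite !opprD opprK !addrA (addrAC (y - a - e) (-b) a) (addrAC (y - a) (-e) a) subrK.
by rewrite (addrAC y (-e) (-b)) (addrAC (y - b) (-e) (-c)).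
Qed.

Unset Implicit Arguments. Set Strict Implicit.

Theorem lemma3 (R : realFieldType) (nu ny Tini N T : nat)
  (Ahat : 'M[R]_(ny, Tini * ny)) (Bhat : 'M[R]_(ny, Tini * nu))
  (EW : 'cV[R]_ny)
  (uud : int -> 'cV[R]_nu) (yud : int -> 'cV[R]_ny)
  (ut : int -> 'cV[R]_nu) (yt : int -> 'cV[R]_ny)
  (Mdag : 'M[R]_((T - N - Tini + 1).+1,
                 (Tini + N - 1) * nu + ((Tini - 1) * ny + 1 * ny)))
  (u0 : int -> 'cV[R]_nu) (y0 : int -> 'cV[R]_ny) :
  (0 < Tini)%N -> (0 < N)%N -> (Tini + N <= T)%N ->
  (forall k : int, 1 <= k <= T%:Z ->
     yud k = Ahat *m seg yud (k - Tini%:Z) Tini + Bhat *m seg uud (k - Tini%:Z) Tini) ->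
  \rank (col_mx (hankel (Tini + N) (T - N - Tini + 1) uud 1)
                (hankel Tini (T - N - Tini + 1) yud 1))
    = ((Tini + N) * nu + Tini * ny)%N ->
  moore_penrose
    (col_mx (hankel (Tini + N - 1) (T - N - Tini + 1).+1 uud 1)
      (col_mx (hankel (Tini - 1) (T - N - Tini + 1).+1 yud 1)
              (hankel 1 (T - N - Tini + 1).+1 yud Tini%:Z))) Mdag ->
  let ywt : 'cV[R]_((N - 1) * ny) :=
    hankel (N - 1) (T - N - Tini + 1).+1 yud (Tini%:Z + 1) *m Mdag
      *m col_mx 0 (col_mx 0 (seg (fun _ => EW) 0 1)) in
  let yw (i : nat) : 'cV[R]_ny :=
    if i == 1%N then EW else blk ywt (i - 2) in
  let u0e (k : int) := if k <= 0 then ut k else u0 k in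
  let y0e (k : int) := if k <= 0 then yt k else y0 k in
  let yu (k : int) := y0 k - \sum_(1 <= i < (absz k).+1) yw i in
  (forall k : int, 1 <= k <= N%:Z ->
     y0 k = Ahat *m seg y0e (k - Tini%:Z) Tini + Bhat *m seg u0e (k - Tini%:Z) Tini + EW)
  <->
  (exists g : 'cV[R]_(T - N - Tini + 1),
     col_mx (hankel Tini (T - N - Tini + 1) uud 1)
       (col_mx (hankel Tini (T - N - Tini + 1) yud 1)
         (col_mx (hankel N (T - N - Tini + 1) uud (Tini%:Z + 1))
                 (hankel N (T - N - Tini + 1) yud (Tini%:Z + 1)))) *m g
     = col_mx (seg ut (1 - Tini%:Z) Tini)
         (col_mx (seg yt (1 - Tini%:Z) Tini)
           (col_mx (seg u0 1 N) (seg yu 1 N)))).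
Proof.
move=> HT HN HTN Hud Hrank Hmp ywt yw u0e y0e yu.
have [B HB] : exists B, col_mx (hankel (Tini + N) (T - N - Tini + 1) uud 1)
                (hankel Tini (T - N - Tini + 1) yud 1) *m B = 1%:M.
  by apply/row_freeP; rewrite /row_free Hrank.
have Hsurj : forall v : 'cV[R]_((Tini + N) * nu + Tini * ny), exists x, col_mx (hankel (Tini + N) (T - N - Tini + 1) uud 1)
                (hankel Tini (T - N - Tini + 1) yud 1) *m x = v.
  by move=> v; exists (B *m v); rewrite mulmxA HB mul1mx.
have Hvx : forall L' (g : 'cV[R]_L') k, (L' <= (T - N - Tini + 1).+1)%N -> 1 <= k -> k + L'%:Z <= T%:Z + 1 ->
   tr g yud k = vx Ahat Bhat (tr g yud) (tr g uud) k.
  move=> L' g k HL k1 kL; exact: (@traj_vx R nu ny Tini Ahat Bhat T L' uud yud g k Hud k1 kL).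
have [x0 Hx0] := Hsurj (col_mx (seg (fun _ => 0 : 'cV[R]_nu) 1 (Tini + N))
   (seg (fun t => if t == Tini%:Z then EW else 0) 1 Tini)).
move: Hx0; rewrite mul_col_mx !hankel_mul => /eq_col_mx [Hx0u Hx0y].
pose x : 'cV[R]_((T - N - Tini + 1).+1) := \col_(c < (T - N - Tini + 1).+1)
   (if (insub (val c) : option 'I_(T - N - Tini + 1)) is Some c' then x0 c' 0 else 0).
have Etrx : forall (m : nat) (z : int -> 'cV[R]_m) t, tr x z t = tr x0 z t.
  move=> m z t; rewrite /tr big_ord_recr /= mxE insubF ?ltnn // scale0r addr0.
  by apply: eq_bigr => c _; rewrite mxE /= valK.
set A3 := col_mx _ _ in Hmp.
pose b : 'cV[R]_((Tini + N - 1) * nu + ((Tini - 1) * ny + 1 * ny)) := col_mx 0 (col_mx 0 (seg (fun=> EW) 0 1)).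
have HAx : A3 *m x = b.
  rewrite /A3 /b !mul_col_mx !hankel_mul; congr col_mx; [|congr col_mx].
  - transitivity (seg (fun _ => 0 : 'cV[R]_nu) 1 (Tini + N - 1)); last exact: seg0.
    apply: seg_eq => r Hr; rewrite Etrx (seg_inj Hx0u) //; lia.
  - transitivity (seg (fun _ => 0 : 'cV[R]_ny) 1 (Tini - 1)); last exact: seg0.
    apply: seg_eq => r Hr; rewrite Etrx (seg_inj Hx0y) /=; last lia.
    by have -> : (1 + r%:Z == Tini%:Z) = false by apply/eqP; lia.
  - apply: seg_eq => r Hr; rewrite Etrx.
    rewrite (_ : Tini%:Z + r%:Z = 1 + (Tini - 1)%N%:Z); last lia.
    rewrite (seg_inj Hx0y) /=; last lia.
    by have -> : (1 + (Tini - 1)%N%:Z == Tini%:Z) = true by apply/eqP; lia.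
have HAg : A3 *m (Mdag *m b) = b.
  by rewrite -HAx !mulmxA; case: Hmp => ->.
have Eywt : ywt = seg (tr (Mdag *m b) yud) (Tini%:Z + 1) (N - 1) by rewrite /ywt -mulmxA hankel_mul.
move: HAg; rewrite /A3 !mul_col_mx !hankel_mul => /eq_col_mx [Hgu /eq_col_mx [Hgy1 HgyT]].
pose gg := Mdag *m b.
have Hu' : forall r : nat, (r < Tini + N - 1)%N -> tr gg uud (1 + r%:Z) = 0.
  by move=> r Hr; move: Hgu; rewrite -(@seg0 R nu 1 (Tini + N - 1)) => /seg_inj /(_ r Hr).
have Hy' : forall r : nat, (r < Tini - 1)%N -> tr gg yud (1 + r%:Z) = 0.
  by move=> r Hr; move: Hgy1; rewrite -(@seg0 R ny 1 (Tini - 1)) => /seg_inj /(_ r Hr).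
have HyT : tr gg yud Tini%:Z = EW.
  by move: HgyT => /seg_inj /(_ 0%N isT); rewrite !addr0.
pose H t := if t <= 0 then 0 else yw (absz t).
have HH : forall t : int, 2 - Tini%:Z <= t <= N%:Z -> H t = tr gg yud (Tini%:Z - 1 + t).
  move=> t Ht; rewrite /H.
  case: (lerP t 0) => t0.
    rewrite (_ : Tini%:Z - 1 + t = 1 + (absz (Tini%:Z - 2 + t))%:Z); last lia.
    by rewrite Hy' //; lia.
  rewrite /yw; case: eqP => t1.
    by rewrite (_ : Tini%:Z - 1 + t = Tini%:Z) ?HyT //; lia.
  rewrite Eywt blk_seg; last lia.
  congr (tr gg yud _); lia.
have HHvx : forall j : int, 2 <= j <= N%:Z -> H j = Ahat *m seg H (j - Tini%:Z) Tini.
  move=> j Hj; rewrite HH; last lia.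
  rewrite (Hvx _ gg (Tini%:Z - 1 + j) (leqnn _)); [| lia | lia].
  rewrite /vx.
  have -> : seg (tr gg uud) (Tini%:Z - 1 + j - Tini%:Z) Tini = 0.
    transitivity (seg (fun _ => 0 : 'cV[R]_nu) 1 Tini); last exact: seg0.
    apply: seg_eq => r Hr.
    rewrite (_ : Tini%:Z - 1 + j - Tini%:Z + r%:Z = 1 + (absz (j - 2 + r%:Z))%:Z); last lia.
    rewrite Hu' //; lia.
  rewrite mulmx0 addr0; congr (_ *m _); apply: seg_eq => r Hr; rewrite HH; last lia.
  congr (tr gg yud _); lia.
pose Z t := if t <= 0 then 0 else \sum_(1 <= i < (absz t).+1) yw i.
have Z0 : forall t, t <= 0 -> Z t = 0 by move=> t t0; rewrite /Z t0.
have H0 : forall t, t <= 0 -> H t = 0 by move=> t t0; rewrite /H t0.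
have H1 : H 1 = EW by [].
have HZ1 : forall t, Z t = Z (t - 1) + H t.
  move=> t; case: (lerP t 0) => t0.
    by rewrite !Z0 ?H0 ?addr0 //; lia.
  have [m Em] : exists m : nat, t = m.+1%:Z by exists (absz t).-1; lia.
  subst t; rewrite (_ : m.+1%:Z - 1 = m%:Z); last lia.
  rewrite /Z /H /= big_nat_recr //=.
  case: (lerP m%:Z 0) => m0 //.
  have -> : m = 0%N by lia.
  by rewrite big_geq // add0r.
have HZvx : forall k : int, 1 <= k <= N%:Z -> Z k = Ahat *m seg Z (k - Tini%:Z) Tini + EW.
  suff P : forall m : nat, (m < N)%N -> Z m.+1%:Z = Ahat *m seg Z (m.+1%:Z - Tini%:Z) Tini + EW.
    move=> k Hk; have -> : k = (absz (k - 1)).+1%:Z by lia.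
    by apply: P; lia.
  elim=> [|m IH] Hm.
    rewrite HZ1 Z0 // H1 add0r.
    have -> : seg Z (1 - Tini%:Z) Tini = 0.
      transitivity (seg (fun _ => 0 : 'cV[R]_ny) (1 - Tini%:Z) Tini); last exact: seg0.
      by apply: seg_eq => r Hr; rewrite Z0 //; lia.
    by rewrite mulmx0 add0r.
  rewrite HZ1 (_ : m.+2%:Z - 1 = m.+1%:Z); last lia.
  rewrite IH; last lia.
  rewrite HHvx; last lia.
  have -> : seg Z (m.+1%:Z - Tini%:Z) Tini = seg (fun t => Z (t - 1)) (m.+2%:Z - Tini%:Z) Tini.
    by apply: seg_eq => r _; congr (Z _); lia.
  have -> : seg Z (m.+2%:Z - Tini%:Z) Tini =
      seg (fun t => Z (t - 1)) (m.+2%:Z - Tini%:Z) Tini + seg H (m.+2%:Z - Tini%:Z) Tini.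
    by rewrite -seg_add; apply: seg_eq => r _; rewrite HZ1.
  by rewrite mulmxDr addrAC.
pose Y t := if t <= 0 then yt t else yu t.
have HY : forall t, Y t = y0e t - Z t.
  by move=> t; rewrite /Y /y0e /yu /Z; case: (lerP t 0) => t0; rewrite ?subr0.
have Part1 : (forall k : int, 1 <= k <= N%:Z -> y0 k = Ahat *m seg y0e (k - Tini%:Z) Tini
     + Bhat *m seg u0e (k - Tini%:Z) Tini + EW) <->
    (forall k : int, 1 <= k <= N%:Z -> Y k = vx Ahat Bhat Y u0e k).
  have E : forall k : int, 1 <= k <= N%:Z -> Y k - vx Ahat Bhat Y u0e k =
      y0 k - (Ahat *m seg y0e (k - Tini%:Z) Tini + Bhat *m seg u0e (k - Tini%:Z) Tini + EW).
    move=> k Hk; rewrite HY HZvx // /vx.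
    have -> : seg Y (k - Tini%:Z) Tini = seg y0e (k - Tini%:Z) Tini - seg Z (k - Tini%:Z) Tini.
      by rewrite -seg_sub; apply: seg_eq => r _; rewrite HY.
    have -> : y0e k = y0 k by rewrite /y0e ifN //; lia.
    by rewrite mulmxBr zmod_fact.
  split=> Hy k Hk; apply/eqP; rewrite -subr_eq0.
    by rewrite E // subr_eq0; apply/eqP; exact: Hy.
  by rewrite -E // subr_eq0; apply/eqP; exact: Hy.
apply: (iff_trans Part1).
have HgV : forall (g : 'cV[R]_(T - N - Tini + 1)) (k : int), 1 <= k <= N%:Z ->
    tr g yud (k + Tini%:Z) = vx Ahat Bhat (fun t => tr g yud (t + Tini%:Z))
                                (fun t => tr g uud (t + Tini%:Z)) k.
  move=> g k Hk; rewrite (Hvx _ g (k + Tini%:Z) (leqnSn _)); [| lia | lia].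
  rewrite /vx !seg_shift.
  by have -> : k + Tini%:Z - Tini%:Z = k - Tini%:Z + Tini%:Z by lia.
split.
  move=> Hy.
  have [x1 Hx1] := Hsurj (col_mx (seg (fun t => u0e (t - Tini%:Z)) 1 (Tini + N))
     (seg (fun t => yt (t - Tini%:Z)) 1 Tini)).
  move: Hx1; rewrite mul_col_mx !hankel_mul => /eq_col_mx [Hx1u Hx1y].
  have Hux : forall t : int, 1 - Tini%:Z <= t <= N%:Z -> tr x1 uud (t + Tini%:Z) = u0e t.
    move=> t Ht; rewrite (_ : t + Tini%:Z = 1 + (absz (t + Tini%:Z - 1)%R)%:Z); last lia.
    rewrite (seg_inj Hx1u) /=; last lia.
    congr (u0e _); lia.
  have Hyx : forall t : int, 1 - Tini%:Z <= t <= 0 -> tr x1 yud (t + Tini%:Z) = Y t.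
    move=> t Ht; rewrite (_ : t + Tini%:Z = 1 + (absz (t + Tini%:Z - 1)%R)%:Z); last lia.
    rewrite (seg_inj Hx1y) /=; last lia.
    rewrite /Y /= ifT; last lia.
    congr (yt _); lia.
  have HYg := vx_unique (HgV x1) Hy Hux Hyx.
  exists x1; rewrite !mul_col_mx !hankel_mul.
  congr col_mx; [|congr col_mx; [|congr col_mx]].
  - apply: seg_eq => r Hr; rewrite (seg_inj Hx1u) /=; last lia.
    rewrite /u0e /= ifT; last lia.
    congr (ut _); lia.
  - apply: seg_eq => r Hr; rewrite (seg_inj Hx1y) /=; last lia.
    congr (yt _); lia.
  - apply: seg_eq => r Hr; rewrite (_ : Tini%:Z + 1 + r%:Z = (1 + r%:Z) + Tini%:Z); last lia.
    rewrite Hux; last lia.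
    rewrite /u0e /= ?ifN //; lia.
  - apply: seg_eq => r Hr; rewrite (_ : Tini%:Z + 1 + r%:Z = (1 + r%:Z) + Tini%:Z); last lia.
    rewrite HYg; last lia.
    rewrite /Y /= ?ifN //; lia.
move=> [g Hg]; move: Hg; rewrite !mul_col_mx !hankel_mul.
move=> /eq_col_mx [E1 /eq_col_mx [E2 /eq_col_mx [E3 E4]]].
have HUg : forall t : int, 1 - Tini%:Z <= t <= N%:Z -> tr g uud (t + Tini%:Z) = u0e t.
  move=> t Ht; rewrite /u0e; case: (lerP t 0) => t0.
    rewrite (_ : t + Tini%:Z = 1 + (absz (t + Tini%:Z - 1)%R)%:Z); last lia.
    rewrite (seg_inj E1); last lia.
    congr (ut _); lia.
  rewrite (_ : t + Tini%:Z = Tini%:Z + 1 + (absz (t - 1)%R)%:Z); last lia.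
  rewrite (seg_inj E3); last lia.
  congr (u0 _); lia.
have HYg : forall t : int, 1 - Tini%:Z <= t <= N%:Z -> tr g yud (t + Tini%:Z) = Y t.
  move=> t Ht; rewrite /Y; case: (lerP t 0) => t0.
    rewrite (_ : t + Tini%:Z = 1 + (absz (t + Tini%:Z - 1)%R)%:Z); last lia.
    rewrite (seg_inj E2); last lia.
    congr (yt _); lia.
  rewrite (_ : t + Tini%:Z = Tini%:Z + 1 + (absz (t - 1)%R)%:Z); last lia.
  rewrite (seg_inj E4); last lia.
  congr (yu _); lia.
move=> k Hk; rewrite -HYg; last lia.
rewrite HgV //; apply: vx_ext => r Hr /=.
  by rewrite HYg //; lia.
by rewrite HUg //; lia.
Qed.
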